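(* Let $\lambda_1,\lambda_2\in\mathbb{C}\setminus\{0,-1,-2,\dots\}$, let $\alpha\in\mathbb{C}\setminus\{-1,-2,\dots\}$, and set $\beta=\lambda_1+\lambda_2-\alpha-2$. On $W=V_{\lambda_1}\otimes V_{\lambda_2}$ put $H^{(1)}=H\otimes\mathbb{I}$, $H^{(2)}=\mathbb{I}\otimes H$ and define $$\Delta(H)=H^{(1)}+H^{(2)},\qquad \Delta(E)=E\otimes\mathbb{I}+\mathbb{I}\otimes E,$$ $$\Delta(F)=(H^{(1)}-\lambda_1+2\alpha+2)(H^{(1)}+\lambda_1)^{-1}(F\otimes\mathbb{I})+(H^{(2)}-\lambda_2+2\beta+2)(H^{(2)}+\lambda_2)^{-1}(\mathbb{I}\otimes F)$$ (the diagonal operators $H^{(i)}+\lambda_i$ are invertible on $W$). Then (a) these operators satisfy the $sl_2$ relations $[\Delta(H),\Delta(E)]=2\Delta(E)$, $[\Delta(H),\Delta(F)]=-2\Delta(F)$, $[\Delta(E),\Delta(F)]=\Delta(H)$, i.e. they define a representation of $sl_2$ on $W$; and (b) for all integers $0\le k\le N$, the vectors $w_{k,N}=\sum_{n=0}^N R_n(k,N)\,|\lambda_1,n\rangle\otimes|\lambda_2,N-n\rangle$ satisfy $\Delta(H)w_{k,N}=(\lambda_1+\lambda_2+2N)w_{k,N}$, $\Delta(E)w_{k,N}=w_{k,N+1}$ and $\Delta(F)w_{k,N}=-(N-k)(N+k+\lambda_1+\lambda_2-1)\,w_{k,N-1}$ (with $w_{k,k-1}=0$); i.e. the $R_n(k,N)$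 are Clebsch–Gordan coefficients for this generalized coproduct of $sl_2$.
   Context: $sl_2$ is generated by $H,E,F$ with $[H,E]=2E$, $[H,F]=-2F$, $[E,F]=H$. For $\lambda\in\mathbb{C}$, $V_\lambda$ is the lowest-weight Verma module with basis $\{|\lambda,n\rangle:n\ge0\}$ and action $H|\lambda,n\rangle=(\lambda+2n)|\lambda,n\rangle$, $E|\lambda,n\rangle=|\lambda,n+1\rangle$, $F|\lambda,n\rangle=-n(n+\lambda-1)|\lambda,n-1\rangle$. The functions $R_n(k,N)$ (proportional to dual Hahn polynomials) are $$R_n(k,N)=\binom{N}{n}\,{}_3F_2\!\left(\begin{matrix}-k,\ k+\alpha+\beta+1,\ -n\\ \alpha+1,\ -N\end{matrix}\;\Big|\;1\right),$$ the terminating series $\sum_{j=0}^{\min(n,k)}\frac{(-k)_j(k+\alpha+\beta+1)_j(-n)_j}{j!(\alpha+1)_j(-N)_j}$ with $(a)_j=a(a+1)\cdots(a+j-1)$. Operator products mean composition. *)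

(* Defs.v *)
(* The scalar field is an arbitrary numClosedFieldType C
   (the MathComp abstraction of the complex numbers; e.g. R[i]). *)
From HB Require Import structures.
From mathcomp Require Import all_boot all_order all_algebra.
Set Implicit Arguments. Unset Strict Implicit. Unset Printing Implicit Defensive.
Import Order.TTheory GRing.Theory Num.Theory.
Local Open Scope ring_scope.

Section Defs.
Variable C : numClosedFieldType.

(* A vector of W = V_{l1} (x) V_{l2} is given by its coefficients:
   v n m is the coefficient of |l1,n> (x) |l2,m>. Elements of the (algebraic)
   tensor product are the finitely supported ones. *)
Definition W := nat -> nat -> C.

Definition fin_supp (v : W) : Prop :=
  exists B : nat, forall n m, (B <= n + m)%N -> v n m = 0.

Definition addW (v w : W) : W := fun n m => v n m + w n m.
Definition subW (v w : W) : W := fun n m => v n m - w n m.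
Definition scaleW (c : C) (v : W) : W := fun n m => c * v n m.
Definition zeroW : W := fun _ _ => 0.

(* sl2 action on the lowest weight Verma module V_l, acting on factor 1 / 2.
   H|l,n> = (l+2n)|l,n>, E|l,n> = |l,n+1>, F|l,n> = -n(n+l-1)|l,n-1>. *)
Definition H1 (l : C) (v : W) : W := fun n m => (l + (2 * n)%:R) * v n m.
Definition H2 (l : C) (v : W) : W := fun n m => (l + (2 * m)%:R) * v n m.
Definition E1 (v : W) : W := fun n m => if n is n'.+1 then v n' m else 0.
Definition E2 (v : W) : W := fun n m => if m is m'.+1 then v n m' else 0.
(* coefficient of |n> in F v is  -(n+1)(n+l) times coefficient of |n+1> in v *)
Definition F1 (l : C) (v : W) : W :=
  fun n m => - (n.+1%:R * (n%:R + l)) * v n.+1 m.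
Definition F2 (l : C) (v : W) : W :=
  fun n m => - (m.+1%:R * (m%:R + l)) * v n m.+1.

(* The inverses of the diagonal operators H^(i) + l_i (eigenvalue 2 l_i + 2n
   on |n>, nonzero when l_i is not in {0,-1,-2,...}). *)
Definition invH1pl (l : C) (v : W) : W := fun n m => (l + (2 * n)%:R + l)^-1 * v n m.
Definition invH2pl (l : C) (v : W) : W := fun n m => (l + (2 * m)%:R + l)^-1 * v n m.

Definition DH (l1 l2 : C) (v : W) : W := addW (H1 l1 v) (H2 l2 v).
Definition DE (v : W) : W := addW (E1 v) (E2 v).
Definition DF (l1 l2 a b : C) (v : W) : W :=
  addW
    (let u := invH1pl l1 (F1 l1 v) in
     subW (addW (H1 l1 u) (scaleW (2 * a + 2) u)) (scaleW l1 u))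
    (let u := invH2pl l2 (F2 l2 v) in
     subW (addW (H2 l2 u) (scaleW (2 * b + 2) u)) (scaleW l2 u)).

Definition poch (a : C) (j : nat) : C := \prod_(i < j) (a + i%:R).

Definition Rcoef (a b : C) (n k N : nat) : C :=
  'C(N, n)%:R *
  \sum_(j < (minn n k).+1)
     (poch (- k%:R) j * poch (k%:R + a + b + 1) j * poch (- n%:R) j)
     / (j`!%:R * poch (a + 1) j * poch (- N%:R) j).

Definition wvec (a b : C) (k N : nat) : W :=
  fun n m => if (n + m == N)%N then Rcoef a b n k N else 0.

End Defs.

(* Main.v *)
Require Import Defs.
From HB Require Import structures.
From mathcomp Require Import all_boot all_order all_algebra.
From mathcomp Require Import ring lra zify.
From Stdlib Require Import FunctionalExtensionality.
Import Order.TTheory GRing.Theory Num.Theory.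
Local Open Scope ring_scope.

Definition Bn (N n j : nat) : nat := if (j <= n)%N then 'C(N - j, n - j) else 0.

Lemma poch_succ (C : numClosedFieldType) (x : C) j : poch x j.+1 = poch x j * (x + j%:R).
Proof. by rewrite /poch big_ord_recr. Qed.

Lemma Bn_step (N n j : nat) : (j < N)%N ->
  ((n - j) * Bn N n j = (N - j) * Bn N n j.+1)%N.
Proof.
move=> hj; rewrite /Bn; case: (ltngtP j n) => hjn.
- idtac.
  have -> : (N - j = (N - j.+1).+1)%N by lia.
  have -> : (n - j = (n - j.+1).+1)%N by lia.
  by rewrite mul_bin_diag.
- by rewrite !muln0.
- by rewrite hjn subnn mul0n muln0.
Qed.

Lemma Bn_stepR (C : numClosedFieldType) (N n j : nat) : (j < N)%N ->
  (j%:R - n%:R) * (Bn N n j)%:R = (j%:R - N%:R) * (Bn N n j.+1)%:R :> C.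
Proof.
move=> hj; have := congr1 (fun x : nat => (x%:R : C)) (Bn_step N n j hj).
rewrite !natrM (natrB _ (ltnW hj)).
case: (leqP j n) => hjn.
  by rewrite natrB // => h; rewrite -opprB mulNr h -mulNr opprB.
by rewrite /Bn; rewrite leqNgt hjn /=; rewrite leqNgt ltnS (ltnW hjn) /= !mulr0.
Qed.

Lemma poch_B (C : numClosedFieldType) (N n j : nat) : (j <= N)%N ->
  'C(N, n)%:R * poch (- (n%:R : C)) j = poch (- N%:R) j * (Bn N n j)%:R.
Proof.
elim: j => [|j IH] hj.
  by rewrite /poch !big_ord0 mul1r mulr1 /Bn leq0n !subn0.
rewrite !poch_succ mulrA IH ?(ltnW hj) // -!mulrA; congr (_ * _).
by rewrite mulrC !(addrC (- _)) Bn_stepR.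
Qed.

Definition cc {C : numClosedFieldType} (a b : C) (k j : nat) : C :=
  poch (- k%:R) j * poch (k%:R + a + b + 1) j / (j`!%:R * poch (a + 1) j).
Definition Rs {C : numClosedFieldType} (a b : C) (k N n : nat) : C :=
  \sum_(j < k.+1) cc a b k j * (Bn N n j)%:R.

Lemma pochN_neq0 (C : numClosedFieldType) (N j : nat) : (j <= N)%N ->
  poch (- (N%:R : C)) j != 0.
Proof.
move=> hj; apply/prodf_neq0 => i _.
rewrite addrC subr_eq0 eqr_nat; apply/eqP => e.
by move: (ltn_ord i); rewrite e ltnNge hj.
Qed.

Lemma Rcoef_Rs (C : numClosedFieldType) (a b : C) (n k N : nat) : (k <= N)%N ->
  Rcoef a b n k N = Rs a b k N n.
Proof.
move=> hk; rewrite /Rcoef /Rs mulr_sumr.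
have hm : (minn n k < k.+1)%N by rewrite ltnS geq_minr.
rewrite (big_ord_widen (k.+1) (fun j => 'C(N, n)%:R *
  (poch (- k%:R) j * poch (k%:R + a + b + 1) j * poch (- n%:R) j /
   (j`!%:R * poch (a + 1) j * poch (- N%:R) j))) hm).
rewrite big_mkcond /=; apply: eq_bigr => i _.
have hiN : (i <= N)%N by apply: leq_trans hk; rewrite -ltnS.
case: ifP => hi.
  have hQ := pochN_neq0 C N i hiN.
  rewrite /cc.
  set c := 'C(N, n)%:R; set Z := poch (- n%:R) i; set Q := poch (- N%:R) i.
  set B := (Bn N n i)%:R.
  set X1 := poch (- k%:R) i; set X2 := poch (k%:R + a + b + 1) i.
  set F1 := i`!%:R; set F2 := poch (a + 1) i.
  rewrite !invfM.
  transitivity (X1 * X2 * F1^-1 * F2^-1 * (c * Z) * Q^-1); first by ring.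
  have e : c * Z = Q * B by exact: poch_B.
  rewrite e.
  transitivity (X1 * X2 * F1^-1 * F2^-1 * B * (Q * Q^-1)); first by ring.
  by rewrite mulfV ?mulr1 // !mulrA.
have hni : (n < i)%N.
  have := ltn_ord i; move/negbT: hi; rewrite -leqNgt; lia.
by rewrite /Bn leqNgt hni mulr0.
Qed.

Lemma Bn_pascal (N n j : nat) : (j <= N)%N -> Bn N.+1 n.+1 j = (Bn N n j + Bn N n.+1 j)%N.
Proof.
move=> hj; rewrite /Bn.
case: (leqP j n) => h1.
  have -> : (j <= n.+1)%N by lia.
  have -> : (N.+1 - j = (N - j).+1)%N by lia.
  have -> : (n.+1 - j = (n - j).+1)%N by lia.
  by rewrite binS addnC.
case: (leqP j n.+1) => h2; last by [].
have -> : j = n.+1 by lia.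
by rewrite subnn !bin0.
Qed.

Lemma Bn_0 (N j : nat) : Bn N.+1 0 j = Bn N 0 j.
Proof. by rewrite /Bn; case: j => [|j] //=; rewrite !subn0 !bin0. Qed.

Lemma Bn_over (N j : nat) : (j <= N)%N -> Bn N N.+1 j = 0%N.
Proof.
move=> hj; rewrite /Bn; case: ifP => // _; apply: bin_small; lia.
Qed.

Lemma Rs_pascal (C : numClosedFieldType) (a b : C) (k N n : nat) : (k <= N)%N ->
  Rs a b k N.+1 n.+1 = Rs a b k N n + Rs a b k N n.+1.
Proof.
move=> hk; rewrite /Rs -big_split /=; apply: eq_bigr => i _.
rewrite Bn_pascal ?natrD ?mulrDr //.
by apply: leq_trans hk; rewrite -ltnS.
Qed.

Lemma Rs_0 (C : numClosedFieldType) (a b : C) (k N : nat) :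
  Rs a b k N.+1 0 = Rs a b k N 0.
Proof. by rewrite /Rs; apply: eq_bigr => i _; rewrite Bn_0. Qed.

Lemma Rs_over (C : numClosedFieldType) (a b : C) (k N : nat) : (k <= N)%N ->
  Rs a b k N N.+1 = 0.
Proof.
move=> hk; rewrite /Rs big1 // => i _; rewrite Bn_over ?mulr0 //.
by apply: leq_trans hk; rewrite -ltnS.
Qed.

Lemma poch_a_neq0 (C : numClosedFieldType) (a : C) (ha : forall n : nat, a != - n.+1%:R)
  (j : nat) : poch (a + 1) j != 0.
Proof.
apply/prodf_neq0 => i _; rewrite -addrA nat1r addr_eq0; exact: ha.
Qed.

Lemma a_neq0 (C : numClosedFieldType) (a : C) (ha : forall n : nat, a != - n.+1%:R)
  (j : nat) : j%:R + a + 1 != 0.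
Proof. by rewrite (addrC _ a) -addrA natr1 addr_eq0; exact: ha. Qed.

Lemma c_succ (C : numClosedFieldType) (a b : C) (ha : forall n : nat, a != - n.+1%:R)
  (k j : nat) :
  cc a b k j.+1 * (j.+1%:R * (j%:R + a + 1)) =
  cc a b k j * ((j%:R - k%:R) * (j%:R + k%:R + a + b + 1)).
Proof.
rewrite /cc !poch_succ factS natrM.
have h1 := poch_a_neq0 C a ha j.
have h2 := a_neq0 C a ha j.
have h3 : (j`!%:R : C) != 0 by rewrite pnatr_eq0 -lt0n fact_gt0.
have h4 : (j.+1%:R : C) != 0 by rewrite pnatr_eq0.
set P := poch (a + 1) j.
field.
by rewrite h1 h3 nat1r h4 addrC addrA h2.
Qed.

Lemma cc_over (C : numClosedFieldType) (a b : C) (k : nat) : cc a b k k.+1 = 0.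
Proof. by rewrite /cc poch_succ addNr mulr0 !mul0r. Qed.

Lemma PT (C : numClosedFieldType) (a b : C) (n m j : nat) :
  n.+1%:R * (n%:R + a + 1) * (Bn (n + m).+1 n.+1 j)%:R
  + m.+1%:R * (m%:R + b + 1) * (Bn (n + m).+1 n j)%:R
  = ((n + m).+1%:R * ((n + m).+1%:R + a + b + 1) - j%:R * (j%:R + a + b + 1))
      * (Bn (n + m) n j)%:R
    + j%:R * (j%:R + a) * (Bn (n + m).+1 n.+1 j)%:R.
Proof.
case: (leqP j n) => h1.
  have [p hp] : exists p, n = (j + p)%N by exists (n - j)%N; lia.
  subst n.
  have -> : Bn (j + p + m).+1 (j + p).+1 j = 'C((p + m).+1, p.+1).
    by rewrite /Bn ifT; [f_equal; lia | lia].
  have -> : Bn (j + p + m).+1 (j + p) j = 'C((p + m).+1, p).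
    by rewrite /Bn ifT; [f_equal; lia | lia].
  have -> : Bn (j + p + m) (j + p) j = 'C(p + m, p).
    by rewrite /Bn ifT; [f_equal; lia | lia].
  have e1 := mul_bin_diag (p + m).+1 p.
  have e2 := mul_bin_down (p + m).+1 p.
  rewrite (_ : ((p + m).+1 - p = m.+1)%N) in e2; last by lia.
  rewrite /= in e1 e2.
  have E1 : ('C((p + m).+1, p.+1)%:R : C) = (p + m).+1%:R * 'C(p + m, p)%:R / p.+1%:R.
    by rewrite -natrM e1 natrM mulrAC mulfV ?mul1r // pnatr_eq0.
  have E2 : ('C((p + m).+1, p)%:R : C) = (p + m).+1%:R * 'C(p + m, p)%:R / m.+1%:R.
    by rewrite -natrM e2 natrM mulrAC mulfV ?mul1r // pnatr_eq0.
  rewrite E1 E2.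
  have hp1 : (p.+1%:R : C) != 0 by rewrite pnatr_eq0.
  have hm1 : (m.+1%:R : C) != 0 by rewrite pnatr_eq0.
  field.
  by rewrite !nat1r !pnatr_eq0.
case: (leqP j n.+1) => h2.
  have -> : j = n.+1 by lia.
  rewrite /Bn leqnn subnn bin0.
  have -> : (n.+1 <= n)%N = false by lia.
  rewrite !mulr0 !addr0 add0r; ring.
rewrite /Bn.
have -> : (j <= n.+1)%N = false by lia.
have -> : (j <= n)%N = false by lia.
by rewrite !mulr0 !addr0.
Qed.

Lemma Bn_shift (N n j : nat) : Bn N.+1 n.+1 j.+1 = Bn N n j.
Proof. by rewrite /Bn ltnS !subSS. Qed.

Lemma DF_Rs (C : numClosedFieldType) (a b : C) (ha : forall n : nat, a != - n.+1%:R)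
  (k n m : nat) :
  n.+1%:R * (n%:R + a + 1) * Rs a b k (n + m).+1 n.+1
  + m.+1%:R * (m%:R + b + 1) * Rs a b k (n + m).+1 n
  = ((n + m).+1%:R - k%:R) * ((n + m).+1%:R + k%:R + a + b + 1) * Rs a b k (n + m) n.
Proof.
set N := (n + m).+1.
pose B0 (j : nat) : C := (Bn (n + m) n j)%:R.
pose B1 (j : nat) : C := (Bn N n.+1 j)%:R.
pose G (j : nat) : C := cc a b k j * (j%:R * (j%:R + a) * B1 j).
have S3 : \sum_(j < k.+1) cc a b k j * ((j%:R - k%:R) * (j%:R + k%:R + a + b + 1) * B0 j)
          = \sum_(j < k.+1) G j.
  transitivity (\sum_(j < k.+1) G j.+1).
    apply: eq_bigr => j _.
    rewrite /G /B1 /N Bn_shift -/(B0 j) mulrA.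
    rewrite (_ : (j.+1%:R + a : C) = j%:R + a + 1); last by rewrite -natr1; ring.
    rewrite c_succ //; ring.
  have L := @big_ord_recl C 0 +%R k.+1 (fun j : 'I_k.+2 => G j).
  have R := @big_ord_recr C 0 +%R k.+1 (fun j : 'I_k.+2 => G j).
  have E := etrans (esym L) R; simpl in E.
  have G0 : G 0%N = 0 by rewrite /G !mul0r mulr0.
  have Gk : G k.+1 = 0 by rewrite /G cc_over mul0r.
  rewrite G0 Gk add0r addr0 in E.
  transitivity (\sum_(i < k.+1) G (lift ord0 i)).
    by apply: eq_bigr => j _; rewrite lift0.
  by rewrite E.
rewrite /Rs !mulr_sumr.
transitivity (\sum_(j < k.+1) cc a b k j * ((N%:R * (N%:R + a + b + 1) - j%:R * (j%:R + a + b + 1)) * B0 j)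
              + \sum_(j < k.+1) G j).
  rewrite -!big_split; apply: eq_bigr => j _ /=.
  rewrite /G /B1 /B0 /N.
  transitivity (cc a b k j * (n.+1%:R * (n%:R + a + 1) * (Bn (n + m).+1 n.+1 j)%:R
     + m.+1%:R * (m%:R + b + 1) * (Bn (n + m).+1 n j)%:R)); first by ring.
  rewrite PT; ring.
rewrite -S3 -big_split; apply: eq_bigr => j _ /=.
rewrite /B0; ring.
Qed.


Lemma l_neq0 (C : numClosedFieldType) (l : C) (hl : forall n : nat, l != - n%:R) (n : nat) :
  l + (2 * n)%:R + l != 0.
Proof.
have -> : l + (2 * n)%:R + l = 2 * (l + n%:R) by rewrite natrM; ring.
by rewrite mulf_eq0 negb_or pnatr_eq0 /= addr_eq0 hl.
Qed.

Lemma DF_simpl (C : numClosedFieldType) (l1 l2 a b : C)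
  (hl1 : forall n : nat, l1 != - n%:R) (hl2 : forall n : nat, l2 != - n%:R) v n m :
  DF l1 l2 a b v n m = - (n.+1%:R * (n%:R + a + 1)) * v n.+1 m
                       - (m.+1%:R * (m%:R + b + 1)) * v n m.+1.
Proof.
rewrite /DF /addW /subW /scaleW /H1 /H2 /invH1pl /invH2pl /F1 /F2.
have h1 := l_neq0 C l1 hl1 n.
have h2 := l_neq0 C l2 hl2 m.
field.
by rewrite natrM in h1; rewrite natrM in h2; rewrite h1 h2.
Qed.

Theorem mainTheorem3 (C : numClosedFieldType) (l1 l2 a : C)
  (hl1 : forall n : nat, l1 != - n%:R)
  (hl2 : forall n : nat, l2 != - n%:R)
  (ha : forall n : nat, a != - n.+1%:R) :
  let b := l1 + l2 - a - 2 in
  (* (a) sl2 relations on W *)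
  (forall v : W C, fin_supp v ->
     [/\ subW (DH l1 l2 (DE v)) (DE (DH l1 l2 v)) = scaleW 2 (DE v),
         subW (DH l1 l2 (DF l1 l2 a b v)) (DF l1 l2 a b (DH l1 l2 v))
           = scaleW (-2) (DF l1 l2 a b v)
       & subW (DE (DF l1 l2 a b v)) (DF l1 l2 a b (DE v)) = DH l1 l2 v]) /\
  (* (b) Clebsch-Gordan vectors *)
  (forall k N : nat, (k <= N)%N ->
     [/\ DH l1 l2 (wvec a b k N) = scaleW (l1 + l2 + (2 * N)%:R) (wvec a b k N),
         DE (wvec a b k N) = wvec a b k N.+1
       & DF l1 l2 a b (wvec a b k N)
           = scaleW (- ((N - k)%:R * (N%:R + k%:R + l1 + l2 - 1)))
                    (if (k < N)%N then wvec a b k N.-1 else zeroW C)]).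
Proof.
move=> b; have DFs := DF_simpl C l1 l2 a b hl1 hl2; split.
  move=> v _; split; apply: functional_extensionality => n;
    apply: functional_extensionality => m.
  - rewrite /subW /DH /DE /addW /H1 /H2 /E1 /E2 /scaleW.
    case: n => [|n]; case: m => [|m]; rewrite ?natrM; ring.
  - rewrite /subW /DH /addW /H1 /H2 /scaleW !DFs ?natrM; ring.
  - rewrite /subW /DE /addW /E1 /E2 !DFs /DH /addW /H1 /H2 /E1 /E2.
    case: n => [|n]; case: m => [|m]; rewrite ?DFs ?natrM /b; ring.
move=> k N hk; split.
- apply: functional_extensionality => n; apply: functional_extensionality => m.
  rewrite /DH /addW /H1 /H2 /scaleW /wvec; case: eqP => [<-|_]; last by rewrite !mulr0 addr0.
  rewrite ?natrM ?natrD; ring.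
- apply: functional_extensionality => n; apply: functional_extensionality => m.
  rewrite /DE /addW /E1 /E2 /wvec.
  case: n => [|n]; case: m => [|m]; rewrite ?(Rcoef_Rs _ _ _ _ _ _ hk) ?(Rcoef_Rs _ _ _ _ _ _ (leqW hk)).
  + by rewrite addr0.
  + by rewrite add0r !add0n eqSS Rs_0.
  + rewrite addr0 !addn0 eqSS; case: eqP => [->|//].
    by rewrite Rs_pascal // Rs_over // addr0.
  + rewrite !addSn !addnS eqSS; case: eqP => [_|_]; last by rewrite addr0.
    by rewrite Rs_pascal.
- apply: functional_extensionality => n; apply: functional_extensionality => m.
  rewrite DFs /wvec /scaleW.
  case: (eqVneq (n + m).+1 N) => hN.
    subst N.
    rewrite addnS eqxx /= !(Rcoef_Rs _ _ _ _ _ _ hk).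
    have D := DF_Rs C a b ha k n m.
    transitivity (- (n.+1%:R * (n%:R + a + 1) * Rs a b k (n + m).+1 n.+1
       + m.+1%:R * (m%:R + b + 1) * Rs a b k (n + m).+1 n)); first by ring.
    rewrite D natrB //.
    case: ifP => hkN.
      rewrite /= eqxx (Rcoef_Rs _ _ _ _ _ _ (_ : (k <= n + m)%N)); last by rewrite -ltnS.
      rewrite /b; ring.
    have -> : k = (n + m).+1 by apply/eqP; rewrite eqn_leq hk leqNgt hkN.
    rewrite /zeroW subrr; ring.
  rewrite addnS (negbTE hN) !mulr0 subrr.
  case: ifP => hkN /=; last by rewrite /zeroW mulr0.
  have -> : (n + m == N.-1) = false.
    apply/negbTE; apply: contra hN => /eqP e; apply/eqP; lia.
  by rewrite mulr0.
Qed.
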